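(* For every prime power $q$ of characteristic $p\ge3$, $J_{\mathrm{JQ}}(q)=J_{\mathrm{JI}}(q)=\left\lfloor\frac{q+5}{6}\right\rfloor$.
   Context: Over $\mathbb{F}_q$ ($q$ odd): the Jacobi quartic curves are $E_{\mathrm{JQ},u}: Y^2=X^4+2uX^2+1$ for $u\in\mathbb{F}_q\setminus\{1,-1\}$; the Jacobi intersection curves are $E_{\mathrm{JI},u}: X^2+Y^2=1,\ uX^2+Z^2=1$ for $u\in\mathbb{F}_q\setminus\{0,1\}$. These are elliptic curves, and the $j$-invariant of such a curve is that of any Weierstrass model birationally equivalent to it. $J_{\mathrm{JQ}}(q)$ and $J_{\mathrm{JI}}(q)$ denote the number of distinct $j$-invariants occurring in the respective families (over the indicated parameter ranges). *)

(* Defs.v *)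
From HB Require Import structures.
From mathcomp Require Import all_boot all_order all_algebra all_field.
Set Implicit Arguments. Unset Strict Implicit. Unset Printing Implicit Defensive.
Import GRing.Theory.
Local Open Scope ring_scope.

(* Generalized Weierstrass equation
   y^2 + a1 x y + a3 y = x^3 + a2 x^2 + a4 x + a6, and its j-invariant
   j = c4^3 / Delta (standard formulas, Silverman III.1). *)
Record weier (F : fieldType) := Weier { wa1 : F; wa2 : F; wa3 : F; wa4 : F; wa6 : F }.

Definition weier_j (F : fieldType) (E : weier F) : F :=
  let: Weier a1 a2 a3 a4 a6 := E in
  let b2 := a1 ^+ 2 + 4 * a2 in
  let b4 := 2 * a4 + a1 * a3 in
  let b6 := a3 ^+ 2 + 4 * a6 in
  let b8 := a1 ^+ 2 * a6 + 4 * a2 * a6 - a1 * a3 * a4 + a2 * a3 ^+ 2 - a4 ^+ 2 in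
  let c4 := b2 ^+ 2 - 24 * b4 in
  let disc := - b2 ^+ 2 * b8 - 8 * b4 ^+ 3 - 27 * b6 ^+ 2 + 9 * b2 * b4 * b6 in
  c4 ^+ 3 / disc.

(* Weierstrass model birationally equivalent to the Jacobi quartic
   Y^2 = X^4 + 2uX^2 + 1 :  v^2 = w^3 - 4u w^2 + (4u^2 - 4) w. *)
Definition JQ_weier (F : fieldType) (u : F) : weier F :=
  Weier 0 (- (4 * u)) 0 (4 * u ^+ 2 - 4) 0.

(* Weierstrass model birationally equivalent to the Jacobi intersection
   X^2 + Y^2 = 1, uX^2 + Z^2 = 1 :  v^2 = w (w - 1) (w - u). *)
Definition JI_weier (F : fieldType) (u : F) : weier F :=
  Weier 0 (- (1 + u)) 0 u 0.

Definition j_JQ (F : fieldType) (u : F) : F := weier_j (JQ_weier u).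
Definition j_JI (F : fieldType) (u : F) : F := weier_j (JI_weier u).

Definition JQ_jset (F : finFieldType) : {set F} :=
  [set j_JQ u | u : F & (u != 1) && (u != -1)].
Definition JI_jset (F : finFieldType) : {set F} :=
  [set j_JI u | u : F & (u != 0) && (u != 1)].

Definition J_JQ (F : finFieldType) : nat := #|JQ_jset F|.
Definition J_JI (F : finFieldType) : nat := #|JI_jset F|.

(* Main.v *)
Require Import Defs.
From HB Require Import structures.
From mathcomp Require Import all_boot all_order all_algebra all_field.
From mathcomp Require Import ring zify.
Set Implicit Arguments. Unset Strict Implicit. Unset Printing Implicit Defensive.
Import GRing.Theory.
Local Open Scope ring_scope.


Ltac nzall := match goal with
  | H : is_true (?X != 0) |- is_true (?e != 0) =>
      first [ (have -> : e = X by ring); exact H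
            | (have -> : e = - X by ring); by rewrite oppr_eq0
            | (have -> : e = X * X by ring); by rewrite mulf_neq0 ]
  end.
Ltac nzc := match goal with
  | |- is_true (?e != 0) =>
      first [ (have -> : e = 1 by ring); exact: oner_neq0
            | (have -> : e = -1 by ring); by rewrite oppr_eq0 oner_eq0 ]
  end.
Ltac fside := repeat (apply/andP; split); try done; try (by rewrite ?oppr_eq0 ?oner_eq0); try nzall; try nzc.


Section Alg.
Variable F : fieldType.
Hypothesis two : (2 : F) != 0.

Definition quad (x : F) := x ^+ 2 - x + 1.
Definition jL (l : F) := 256 * quad l ^+ 3 / (l ^+ 2 * (l - 1) ^+ 2).
Definition NN (x : F) := (x + 1) * (x - 2) * (x - 1 / 2) * quad x.
Definition inD (x : F) := (x != 0) && (x != 1).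
Definition orb (l : F) := [:: l; 1 - l; 1 / l; 1 / (1 - l); l / (l - 1); (l - 1) / l].

Lemma n256 : (256 : F) != 0.
Proof. have -> : (256 : F) = 2 ^+ 8 by ring. by rewrite expf_neq0. Qed.

Lemma solve_lin (c b e : F) : c != 0 -> c * b - e = 0 -> b = e / c.
Proof. move=> c0 /eqP; rewrite subr_eq0 => /eqP <-; by rewrite [c * b]mulrC mulfK. Qed.

Lemma orbid (l m : F) : (m ^+ 2 - m + 1) ^+ 3 * (l ^+ 2 * (l - 1) ^+ 2) - (l ^+ 2 - l + 1) ^+ 3 * (m ^+ 2 * (m - 1) ^+ 2)
 = - ((m - l) * (m - (1 - l)) * (l * m - 1) * ((1 - l) * m - 1) * ((l - 1) * m - l) * (l * m - (l - 1))).
Proof. ring. Qed.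

Lemma jL_orb l m : inD l -> inD m -> jL m = jL l -> m \in orb l.
Proof.
case/andP=> l0 l1; case/andP=> m0 m1 /eqP; rewrite -subr_eq0 => /eqP E.
have l1' : l - 1 != 0 by rewrite subr_eq0.
have m1' : m - 1 != 0 by rewrite subr_eq0.
have l1'' : 1 - l != 0 by rewrite -opprB oppr_eq0.
have H : 256 * ((m ^+ 2 - m + 1) ^+ 3 * (l ^+ 2 * (l - 1) ^+ 2) - (l ^+ 2 - l + 1) ^+ 3 * (m ^+ 2 * (m - 1) ^+ 2))
  = (jL m - jL l) * ((m ^+ 2 * (m - 1) ^+ 2) * (l ^+ 2 * (l - 1) ^+ 2)).
  rewrite /jL /quad; field; by rewrite ?m1' ?m0 ?l1' ?l0.
move: H; rewrite E mul0r orbid => /eqP; rewrite mulf_eq0 (negbTE n256) /= oppr_eq0 !mulf_eq0 -!orbA.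
rewrite /orb !inE.
case/orP=> [/eqP/subr0_eq ->|]; first by rewrite eqxx.
case/orP=> [/eqP/subr0_eq ->|]; first by rewrite eqxx !orbT.
case/orP=> [/eqP/(solve_lin l0) ->|]; first by rewrite eqxx !orbT.
case/orP=> [/eqP/(solve_lin l1'') ->|]; first by rewrite eqxx !orbT.
case/orP=> [/eqP/(solve_lin l1') ->|]; first by rewrite eqxx !orbT.
move=> /eqP/(solve_lin l0) ->; by rewrite eqxx !orbT.
Qed.

Lemma ne1 (x y : F) : y != 0 -> x != y -> x / y != 1.
Proof. move=> y0; apply: contra => /eqP h; by rewrite -(divfK y0 x) h mul1r. Qed.

Lemma nn_mul (a c : F) : c != 0 -> (a * c == 0) = (a == 0).
Proof. by move=> c0; rewrite mulf_eq0 (negbTE c0) orbF. Qed.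

Lemma orb_back l m : inD l -> m \in orb l -> [/\ inD m, jL m = jL l & (NN m == 0) = (NN l == 0)].
Proof.
case/andP=> l0 l1.
have l1' : l - 1 != 0 by rewrite subr_eq0.
have l1'' : 1 - l != 0 by rewrite -opprB oppr_eq0.
rewrite /orb !inE /inD.
case/predU1P=> [->|]; first by rewrite l0 l1.
case/predU1P=> [->|].
  split; first by rewrite l1'' -subr_eq0 addrAC subrr add0r oppr_eq0 l0.
    rewrite /jL /quad; field; fside.
  have -> : NN (1 - l) = NN l * (-1) by rewrite /NN /quad; field; fside.
  by rewrite nn_mul // oppr_eq0 oner_eq0.
case/predU1P=> [->|].
  split; first by rewrite mul1r invr_eq0 l0 /= -div1r ne1 // eq_sym.
    rewrite /jL /quad; field; fside.
  have -> : NN (1 / l) = NN l * (1 / l ^+ 5) by rewrite /NN /quad; field; fside.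
  by rewrite nn_mul // mul1r invr_eq0 expf_neq0.
case/predU1P=> [->|].
  split; first (apply/andP; split; [by rewrite mulf_neq0 ?oner_eq0 ?invr_eq0 | apply: ne1 => //; by rewrite eq_sym -subr_eq0 addrAC subrr add0r oppr_eq0 l0]).
    rewrite /jL /quad; field; fside.
  have -> : NN (1 / (1 - l)) = NN l * (-1 / (1 - l) ^+ 5) by rewrite /NN /quad; field; fside.
  by rewrite nn_mul // mulf_neq0 ?oppr_eq0 ?oner_eq0 // invr_eq0 expf_neq0.
case/predU1P=> [->|].
  split; first by rewrite mulf_neq0 ?invr_eq0 // ne1 // -subr_eq0 opprB addrC subrK oner_eq0.
    rewrite /jL /quad; field; fside.
  have -> : NN (l / (l - 1)) = NN l * (-1 / (l - 1) ^+ 5) by rewrite /NN /quad; field; fside.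
  by rewrite nn_mul // mulf_neq0 ?oppr_eq0 ?oner_eq0 // invr_eq0 expf_neq0.
move=> /eqP ->.
split; first by rewrite mulf_neq0 ?invr_eq0 // ne1 // -subr_eq0 addrAC subrr add0r oppr_eq0 oner_eq0.
  rewrite /jL /quad; field; fside.
have -> : NN ((l - 1) / l) = NN l * (-1 / l ^+ 5) by rewrite /NN /quad; field; fside.
by rewrite nn_mul // mulf_neq0 ?oppr_eq0 ?oner_eq0 // invr_eq0 expf_neq0.
Qed.

Lemma neq_help (a b d K : F) : (a - b) * d = K -> K != 0 -> (a == b) = false.
Proof. move=> H K0; apply/negbTE; apply: contra K0 => /eqP E; by rewrite -H E subrr mul0r. Qed.

Lemma orb_uniq l : inD l -> NN l != 0 -> uniq (orb l).
Proof.
case/andP=> l0 l1 HN.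
have l1' : l - 1 != 0 by rewrite subr_eq0.
have l1'' : 1 - l != 0 by rewrite -opprB oppr_eq0.
move: HN; rewrite /NN !mulf_eq0 !negb_or => /andP[/andP[/andP[hp hm] hh] hq].
have h21 : 2 * l - 1 != 0.
  have -> : 2 * l - 1 = 2 * (l - 1 / 2) by field.
  by rewrite mulf_neq0.
have n12 : (l == 1 - l) = false.
  apply: (@neq_help _ _ (1) (2 * l - 1)); [rewrite /quad; field; fside | repeat apply: mulf_neq0; rewrite ?oppr_eq0; fside].
have n13 : (l == 1 / l) = false.
  apply: (@neq_help _ _ (l) ((l - 1) * (l+1))); [rewrite /quad; field; fside | repeat apply: mulf_neq0; rewrite ?oppr_eq0; fside].
have n14 : (l == 1 / (1 - l)) = false.
  apply: (@neq_help _ _ (1 - l) (-quad l)); [rewrite /quad; field; fside | repeat apply: mulf_neq0; rewrite ?oppr_eq0; fside].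
have n15 : (l == l / (l - 1)) = false.
  apply: (@neq_help _ _ (l - 1) (l * (l - 2))); [rewrite /quad; field; fside | repeat apply: mulf_neq0; rewrite ?oppr_eq0; fside].
have n16 : (l == (l - 1) / l) = false.
  apply: (@neq_help _ _ (l) (quad l)); [rewrite /quad; field; fside | repeat apply: mulf_neq0; rewrite ?oppr_eq0; fside].
have n23 : (1 - l == 1 / l) = false.
  apply: (@neq_help _ _ (l) (-quad l)); [rewrite /quad; field; fside | repeat apply: mulf_neq0; rewrite ?oppr_eq0; fside].
have n24 : (1 - l == 1 / (1 - l)) = false.
  apply: (@neq_help _ _ (1 - l) (l * (l - 2))); [rewrite /quad; field; fside | repeat apply: mulf_neq0; rewrite ?oppr_eq0; fside].
have n25 : (1 - l == l / (l - 1)) = false.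
  apply: (@neq_help _ _ (l - 1) (-quad l)); [rewrite /quad; field; fside | repeat apply: mulf_neq0; rewrite ?oppr_eq0; fside].
have n26 : (1 - l == (l - 1) / l) = false.
  apply: (@neq_help _ _ (l) ((1 - l) * (l+1))); [rewrite /quad; field; fside | repeat apply: mulf_neq0; rewrite ?oppr_eq0; fside].
have n34 : (1 / l == 1 / (1 - l)) = false.
  apply: (@neq_help _ _ (l * (1 - l)) (1 - 2 * l)); [rewrite /quad; field; fside | repeat apply: mulf_neq0; rewrite ?oppr_eq0; fside].
have n35 : (1 / l == l / (l - 1)) = false.
  apply: (@neq_help _ _ (l * (l - 1)) (-quad l)); [rewrite /quad; field; fside | repeat apply: mulf_neq0; rewrite ?oppr_eq0; fside].
have n36 : (1 / l == (l - 1) / l) = false.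
  apply: (@neq_help _ _ (l) (2 - l)); [rewrite /quad; field; fside | repeat apply: mulf_neq0; rewrite ?oppr_eq0; fside].
have n45 : (1 / (1 - l) == l / (l - 1)) = false.
  apply: (@neq_help _ _ (1 - l) (1+l)); [rewrite /quad; field; fside | repeat apply: mulf_neq0; rewrite ?oppr_eq0; fside].
have n46 : (1 / (1 - l) == (l - 1) / l) = false.
  apply: (@neq_help _ _ (l * (1 - l)) (quad l)); [rewrite /quad; field; fside | repeat apply: mulf_neq0; rewrite ?oppr_eq0; fside].
have n56 : (l / (l - 1) == (l - 1) / l) = false.
  apply: (@neq_help _ _ (l * (l - 1)) (2 * l - 1)); [rewrite /quad; field; fside | repeat apply: mulf_neq0; rewrite ?oppr_eq0; fside].
rewrite /orb /= !inE n12 n13 n14 n15 n16 n23 n24 n25 n26 n34 n35 n36 n45 n46 n56.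
by [].
Qed.

End Alg.


Lemma card_fibers (T U : finType) (f : T -> U) (A : {set T}) k :
  (forall a, a \in A -> #|[set b in A | f b == f a]| = k) -> #|A| = (k * #|f @: A|)%N.
Proof.
move=> H; rewrite -sum1_card (partition_big f (mem (f @: A))) /=; last first.
  by move=> i iA; apply: imset_f.
rewrite mulnC -sum_nat_const; apply: eq_bigr => x /imsetP [a aA ->].
rewrite -(H a aA) -sum1_card; apply: eq_bigl => b; by rewrite inE.
Qed.

Section Count.
Variable F : finFieldType.
Hypothesis two : (2 : F) != 0.

Definition Dset := [set x : F | inD x].
Definition Aset := [set x : F | inD x && (NN x != 0)].
Definition Sset := [set x : F | inD x && (NN x == 0)].

Lemma card_D : #|Dset| = (#|F| - 2)%N.
Proof.
have -> : Dset = ~: [set 0; 1].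
  by apply/setP => x; rewrite !inE /inD negb_or.
by rewrite cardsCs setCK cards2 eq_sym oner_neq0.
Qed.

Lemma card_A : #|Aset| = (6 * #|(@jL F) @: Aset|)%N.
Proof.
apply: card_fibers => a; rewrite inE => /andP [aD aN].
have -> : [set b in Aset | jL b == jL a] = [set x in orb a].
  apply/setP => b; rewrite !in_set; apply/idP/idP.
    case/andP => /andP [bD _] /eqP E; exact: jL_orb.
  move=> bo; have [bD E HN] := orb_back two aD bo.
  by rewrite bD E eqxx HN aN.
by rewrite cardsE; apply/card_uniqP; exact: orb_uniq.
Qed.

Lemma D_split : Dset = Aset :|: Sset.
Proof. by apply/setP => x; rewrite !inE; case: (inD x); case: (NN x == 0). Qed.

Lemma card_DAS : #|Dset| = (#|Aset| + #|Sset|)%N.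
Proof.
rewrite D_split -cardsUI.
have -> : Aset :&: Sset = set0.
  by apply/setP => x; rewrite !inE; case: (inD x); case: (NN x == 0).
by rewrite cards0 addn0.
Qed.

Lemma card_img : #|(@jL F) @: Dset| = (#|(@jL F) @: Aset| + #|(@jL F) @: Sset|)%N.
Proof.
rewrite D_split imsetU -cardsUI.
have -> : (@jL F) @: Aset :&: (@jL F) @: Sset = set0.
  apply/setP => y; rewrite in_set0; apply/setIP => [[/imsetP[a aA ->] /imsetP[b bS E]]].
  move: aA bS; rewrite !inE => /andP[aD aN] /andP[bD bN].
  have [_ _ HN] := orb_back two aD (jL_orb two aD bD (esym E)).
  by move: bN; rewrite HN (negbTE aN).
by rewrite cards0 addn0.
Qed.

Lemma inD_m1 : @inD F (-1).
Proof.
rewrite /inD oppr_eq0 oner_eq0 /=; apply/negP => /eqP h; move: two.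
have -> : (2:F) = 1 - -1 by ring.
by rewrite h subrr eqxx.
Qed.

Lemma NN_inD (x : F) : NN x == 0 -> inD x.
Proof.
move=> h; apply/andP; split; apply: contraTneq h => ->.
  by rewrite (_ : NN 0 = 1) ?oner_eq0 //; rewrite /NN /quad; field; fside.
by rewrite (_ : NN 1 = -1) ?oppr_eq0 ?oner_eq0 //; rewrite /NN /quad; field; fside.
Qed.

Lemma S_NN : Sset = [set x | NN x == 0].
Proof.
apply/setP => x; rewrite !inE; case h: (NN x == 0); last by rewrite andbF.
by rewrite NN_inD.
Qed.

Lemma S_char3 : (3:F) = 0 -> Sset = [set -1].
Proof.
move=> H; rewrite S_NN; apply/setP => x; rewrite !inE.
have h2 : (2:F) = -1.
  have -> : (2:F) = 3 - 1 by ring.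
  by rewrite H sub0r.
have -> : NN x = (x + 1) ^+ 5.
  rewrite /NN /quad.
  have -> : x ^+ 2 - x + 1 = (x + 1) ^+ 2 - 3 * x by ring.
  rewrite H mul0r subr0 h2; field; fside.
by rewrite expf_eq0 /= addr_eq0.
Qed.

Lemma S_gen : Sset = ((-1) |: (2 |: [set 1 / 2])) :|: [set x | quad x == 0].
Proof.
rewrite S_NN; apply/setP => x; rewrite !inE /NN !mulf_eq0 addr_eq0 !subr_eq0.
by rewrite -!orbA.
Qed.

Lemma quad_1m (r : F) : quad (1 - r) = quad r.
Proof. rewrite /quad; ring. Qed.

Lemma R_cases (three : (3 : F) != 0) : [set x : F | quad x == 0] = set0 \/
   exists r, [set x : F | quad x == 0] = [set r; 1 - r] /\ (r != 1 - r) /\ quad r = 0.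
Proof.
case: (set_0Vmem [set x : F | quad x == 0]) => [->|[r]]; first by left.
rewrite inE => /eqP rq; right; exists r; split; last split => //.
  apply/setP => x; rewrite !inE.
  have -> : quad x = (x - r) * (x - (1 - r)).
    by rewrite -[quad x]subr0 -{1}rq /quad; ring.
  by rewrite mulf_eq0 !subr_eq0.
apply/negbT; apply: (@neq_help _ _ _ (r - (1 - r)) (-3)).
  have -> : (r - (1 - r)) * (r - (1 - r)) = 4 * quad r - 3 by rewrite /quad; ring.
  by rewrite rq mulr0 sub0r.
by rewrite oppr_eq0.
Qed.

Lemma JI_count : #|(@jL F) @: Dset| = ((#|F| + 5) %/ 6)%N.
Proof.
have cD := card_D; have cDAS := card_DAS; have cA := card_A; have ci := card_img.
case: (eqVneq (3:F) 0) => [h3|h3].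
  rewrite S_char3 // cards1 in cDAS; rewrite S_char3 // imset_set1 cards1 in ci.
  lia.
pose U : {set F} := (-1) |: (2 |: [set 1 / 2]).
have n1 : ((-1 : F) == 2) = false.
  apply: (@neq_help _ _ _ 1 (-3)); [field; fside | by rewrite oppr_eq0].
have n2 : ((-1 : F) == 1 / 2) = false.
  apply: (@neq_help _ _ _ 2 (-3)); [field; fside | by rewrite oppr_eq0].
have n3 : ((2 : F) == 1 / 2) = false.
  apply: (@neq_help _ _ _ 2 3); [field; fside | by []].
have U3 : #|U| = 3%N by rewrite /U !cardsU1 cards1 !inE n1 n2 n3.
have UR : U :&: [set x | quad x == 0] = set0.
  apply/setP => x; rewrite /U !inE; case: (boolP (quad x == 0)) => qx; last by rewrite andbF.
  rewrite andbT; apply/negP; case/orP => [/eqP xe|/orP[]/eqP xe]; move: qx; rewrite xe /quad.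
  - rewrite (_ : (-1) ^+ 2 - -1 + 1 = 3 :> F); [by rewrite (negbTE h3) | ring].
  - rewrite (_ : 2 ^+ 2 - 2 + 1 = 3 :> F); [by rewrite (negbTE h3) | ring].
  - rewrite (_ : (1 / 2) ^+ 2 - 1 / 2 + 1 = 3 / (2 * 2) :> F); last by field; fside.
    by rewrite mulf_eq0 (negbTE h3) /= invr_eq0 mulf_eq0 (negbTE two).
have jv : jL (-1 : F) != 0.
  rewrite (_ : jL (-1 : F) = 2 ^+ 6 * 3 ^+ 3); last by rewrite /jL /quad; field; fside.
  by rewrite mulf_neq0 // expf_neq0.
have jU : (@jL F) @: U = [set jL (-1 : F)].
  rewrite /U !imsetU1 imset_set1.
  rewrite (_ : jL (2 : F) = jL (-1)); last by rewrite /jL /quad; field; fside.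
  rewrite (_ : jL (1 / 2 : F) = jL (-1)); last by rewrite /jL /quad; field; fside.
  by apply/setP => y; rewrite !inE !orbb.
case: (R_cases h3) => [R0 | [r [Rr [rne rq]]]].
  rewrite S_gen R0 setU0 -/U U3 in cDAS.
  rewrite S_gen R0 setU0 -/U jU cards1 in ci.
  lia.
have c5 : #|U :|: [set x | quad x == 0]| = 5%N.
  apply/eqP; rewrite -(eqn_add2r #|U :&: [set x | quad x == 0]|) cardsUI UR cards0 U3 Rr cards2 rne.
  by [].
have jr : forall x : F, quad x = 0 -> jL x = 0.
  by move=> x qx; rewrite /jL qx expr0n mulr0 mul0r.
have jR : (@jL F) @: [set r; 1 - r] = [set 0].
  rewrite imsetU1 imset_set1 jr // jr ?quad_1m //.
  by apply/setP => y; rewrite !inE orbb.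
rewrite S_gen -/U c5 in cDAS.
rewrite S_gen -/U imsetU jU Rr jR cards2 jv in ci.
lia.
Qed.

End Count.

Section Top.
Variable F : fieldType.
Hypothesis two : (2 : F) != 0.

Lemma jJI_form (l : F) : l != 0 -> l != 1 -> j_JI l = jL l.
Proof.
move=> l0 l1; rewrite /j_JI /weier_j /= /jL /quad.
have l1' : l - 1 != 0 by rewrite subr_eq0.
set C := (X in X ^+ 3 / _).
have -> : C = 16 * (l ^+ 2 - l + 1) by rewrite /C; ring.
set D := (X in _ / X).
have -> : D = 16 * (l ^+ 2 * (l - 1) ^+ 2) by rewrite /D; ring.
have h16 : (16 : F) = 2 ^+ 4 by ring.
have n16 : (16 : F) != 0 by rewrite h16 expf_neq0.
field; fside.
Qed.

Lemma jJQ_form (u : F) : u != 1 -> u != -1 -> j_JQ u = jL ((u - 1) / (u + 1)).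
Proof.
move=> u1 um1; rewrite /j_JQ /weier_j /= /jL /quad.
have u1' : u - 1 != 0 by rewrite subr_eq0.
have um1' : u + 1 != 0 by rewrite addr_eq0.
set C := (X in X ^+ 3 / _).
have -> : C = 64 * (u ^+ 2 + 3) by rewrite /C; ring.
set D := (X in _ / X).
have -> : D = 4096 * ((u - 1) ^+ 2 * (u + 1) ^+ 2) by rewrite /D; ring.
have n4096 : (4096 : F) != 0.
  have -> : (4096 : F) = 2 ^+ 12 by ring.
  by rewrite expf_neq0.
field; fside.
Qed.
End Top.

Section Fin.
Variable F : finFieldType.
Hypothesis two : (2 : F) != 0.

Lemma JI_set : JI_jset F = (@jL F) @: Dset F.
Proof.
apply/setP => y; apply/imsetP/imsetP => [[x Hx ->]|[x Hx ->]]; exists x.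
- by move: Hx; rewrite !inE.
- by move: Hx; rewrite !inE => /andP [x0 x1]; rewrite jJI_form.
- by move: Hx; rewrite !inE.
- by move: Hx; rewrite !inE => /andP [x0 x1]; rewrite jJI_form.
Qed.

Lemma JQ_set : JQ_jset F = JI_jset F.
Proof.
apply/setP => y; apply/imsetP/imsetP => [[u Hu ->]|[l Hl ->]].
  move: Hu; rewrite inE => /andP [u1 um1].
  have u1' : u - 1 != 0 by rewrite subr_eq0.
  have um1' : u + 1 != 0 by rewrite addr_eq0.
  have l0 : (u - 1) / (u + 1) != 0 by rewrite mulf_neq0 // invr_eq0.
  have l1 : (u - 1) / (u + 1) != 1.
    apply: ne1 => //; apply/negbT; apply: (@neq_help _ _ _ 1 (-2)).
      ring.
    by rewrite oppr_eq0.
  exists ((u - 1) / (u + 1)); first by rewrite inE l0 l1.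
  by rewrite jJQ_form // jJI_form.
move: Hl; rewrite inE => /andP [l0 l1].
have l1' : 1 - l != 0 by rewrite subr_eq0 eq_sym.
have n1 : ((1 + l) / (1 - l) == 1) = false.
  apply: (@neq_help _ _ _ (1 - l) (2 * l)); [field; fside | by rewrite mulf_neq0].
have n2 : ((1 + l) / (1 - l) == -1) = false.
  apply: (@neq_help _ _ _ (1 - l) 2); [field; fside | by []].
exists ((1 + l) / (1 - l)); first by rewrite inE n1 n2.
rewrite jJQ_form ?n1 ?n2 // jJI_form //.
congr jL; field; fside.
Qed.

Lemma J_count : J_JQ F = ((#|F| + 5) %/ 6)%N /\ J_JI F = ((#|F| + 5) %/ 6)%N.
Proof.
rewrite /J_JQ /J_JI JQ_set JI_set JI_count //; by split.
Qed.
End Fin.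

Local Close Scope ring_scope.

Theorem mainTheorem8 (F : finFieldType) (p : nat) :
  p \in [pchar F]%R -> 3 <= p ->
  J_JQ F = (#|F| + 5) %/ 6 /\ J_JI F = (#|F| + 5) %/ 6.
Proof.
move=> pc p3; apply: J_count.
rewrite -[(2 : F)%R]/(2%:R)%R -(dvdn_pcharf pc).
apply/negP => /(dvdn_leq (isT : 0 < 2)) h; lia.
Qed.
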